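(* Let $\Gamma$ be a finite group acting linearly on a finite-dimensional complex vector space $V$, consider the cotangent lifted action on $T^*V=V\times V^*$, let $R=\mathbb C[T^*V]$, let $\pi:\operatorname{Der}(R)^\Gamma\to\operatorname{Der}(R^\Gamma)$ be the restriction map $X\mapsto X|_{R^\Gamma}$, and let $\lambda:\operatorname{Der}(R^\Gamma)\to\operatorname{Der}(R)^\Gamma$ be an $R^\Gamma$-linear map with $\pi\lambda=\operatorname{id}_{\operatorname{Der}(R^\Gamma)}$. Then $\omega(X,Y):=\omega_0(\lambda(X),\lambda(Y))$, for $X,Y\in\operatorname{Der}(R^\Gamma)$, defines a non-degenerate closed form $\omega\in\operatorname{Alt}^2_{R^\Gamma}(\operatorname{Der}(R^\Gamma),R^\Gamma)$.
   Context: $\omega_0=\sum_i\mathrm dq^i\wedge\mathrm dp_i$ is the canonical symplectic form on $T^*V$, evaluated on derivations of $R$. $\Gamma$ acts on derivations by $X\mapsto(\gamma^{-1})^*X\gamma^*$; $\operatorname{Der}(R)^\Gamma$ denotes invariant derivations. (It is known that $\pi$ is surjective, so such a section $\lambda$ exists.) Closedness is with respect to the naive de Rham differential of the Lie-Rinehart algebra $(\operatorname{Der}(R^\Gamma),R^\Gamma)$: $(\mathrm d\omega)(X_0,X_1,X_2)=\sum_i(-1)^iX_i(\omega(\dots\widehat{X_i}\dots))+\sum_{i<j}(-1)^{i+j}\omega([X_i,X_j],\dots\widehat{X_i}\dots\widehat{X_j}\dots)$. Non-degenerate means $\omega(X,Y)=0$ for all $Y$ implies $X=0$. *)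

(* Defs.v *)
From HB Require Import structures.
From mathcomp Require Import all_boot all_order all_algebra all_fingroup.
From mathcomp Require Import mxrepresentation.
From mathcomp Require Import complex.
From mathcomp Require Import reals.
From mathcomp Require Import mpoly.

Set Implicit Arguments.
Unset Strict Implicit.
Unset Printing Implicit Defensive.

Import GRing.Theory.
Local Open Scope ring_scope.

(* Coordinate ring R = C[T^*V] = C[q_1..q_n, p_1..p_n], V = C^n.
   Variable 'X_(lshift n i) is q_i (i-th coordinate on V),
   variable 'X_(rshift n i) is p_i (i-th coordinate on the dual of V). *)
Definition coordRing (R : realType) (n : nat) := {mpoly complex R [n + n]}.

Section Defs.
Variables (R : realType) (n : nat) (gT : finGroupType) (G : {group gT})
          (rho : mx_representation R[i] G n).

Local Notation RR := (coordRing R n).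

Definition qv (i : 'I_n) : RR := 'X_(lshift n i).
Definition pv (i : 'I_n) : RR := 'X_(rshift n i).

(* Pullback gamma^* along the cotangent-lifted action
   (v, xi) |-> (rho g v, xi o (rho g)^-1) on T^*V = V x V^*:
   gamma^* q_i = sum_j A_ij q_j,  gamma^* p_i = sum_j (A^-1)_ji p_j,
   with A = rho g. *)
Definition act_image (g : gT) (k : 'I_(n + n)) : RR :=
  match split k with
  | inl i => \sum_(j < n) (rho g i j) *: qv j
  | inr i => \sum_(j < n) (invmx (rho g) j i) *: pv j
  end.

Definition act (g : gT) (f : RR) : RR :=
  f \mPo [tuple act_image g k | k < n + n].

Definition Ginvariant (f : RR) : bool := [forall g in G, act g f == f].

Definition is_der (D : RR -> RR) : Prop :=
  (forall (c : R[i]) f h, D (c *: f + h) = c *: D f + D h) /\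
  (forall f h, D (f * h) = f * D h + D f * h).

Definition der_invariant (D : RR -> RR) : Prop :=
  forall g, g \in G -> forall f, act g^-1 (D (act g f)) = D f.

(* C-linear derivations of the subalgebra R^Gamma.  Such a derivation is
   represented by its extension by zero to R (so equality of derivations of
   R^Gamma is equality of functions). *)
Definition is_der_inv (D : RR -> RR) : Prop :=
  [/\ forall f, ~~ Ginvariant f -> D f = 0,
      forall f, Ginvariant f -> Ginvariant (D f),
      forall (c : R[i]) f h, Ginvariant f -> Ginvariant h ->
        D (c *: f + h) = c *: D f + D h &
      forall f h, Ginvariant f -> Ginvariant h ->
        D (f * h) = f * D h + D f * h].

Definition der_scale_add (a : RR) (X Y : RR -> RR) : RR -> RR :=
  fun f => a * X f + Y f.
Definition der_bracket (X Y : RR -> RR) : RR -> RR :=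
  fun f => X (Y f) - Y (X f).

Definition omega0 (X Y : RR -> RR) : RR :=
  \sum_(i < n) (X (qv i) * Y (pv i) - X (pv i) * Y (qv i)).

Definition omega (lam : (RR -> RR) -> (RR -> RR)) (X Y : RR -> RR) : RR :=
  omega0 (lam X) (lam Y).

Definition is_alt2 (w : (RR -> RR) -> (RR -> RR) -> RR) : Prop :=
  [/\ forall X Y, is_der_inv X -> is_der_inv Y -> Ginvariant (w X Y),
      forall a X Y Z, Ginvariant a -> is_der_inv X -> is_der_inv Y ->
        is_der_inv Z -> w (der_scale_add a X Y) Z = a * w X Z + w Y Z,
      forall a X Y Z, Ginvariant a -> is_der_inv X -> is_der_inv Y ->
        is_der_inv Z -> w Z (der_scale_add a X Y) = a * w Z X + w Z Y &
      forall X, is_der_inv X -> w X X = 0].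

Definition dR2 (w : (RR -> RR) -> (RR -> RR) -> RR) (X0 X1 X2 : RR -> RR) : RR :=
  X0 (w X1 X2) - X1 (w X0 X2) + X2 (w X0 X1)
  - w (der_bracket X0 X1) X2 + w (der_bracket X0 X2) X1
  - w (der_bracket X1 X2) X0.

Definition is_closed2 (w : (RR -> RR) -> (RR -> RR) -> RR) : Prop :=
  forall X0 X1 X2, is_der_inv X0 -> is_der_inv X1 -> is_der_inv X2 ->
    dR2 w X0 X1 X2 = 0.

Definition is_nondegenerate2 (w : (RR -> RR) -> (RR -> RR) -> RR) : Prop :=
  forall X, is_der_inv X -> (forall Y, is_der_inv Y -> w X Y = 0) ->
    forall f, X f = 0.

End Defs.

(* Main.v *)
Require Import Defs.
From HB Require Import structures.
From mathcomp Require Import all_boot all_order all_algebra all_fingroup.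
From mathcomp Require Import mxrepresentation complex reals mpoly.
From mathcomp Require Import ring.
Import GRing.Theory.
Local Open Scope ring_scope.
Set Implicit Arguments.
Unset Strict Implicit.

Section Der.
Variables (R : realType) (n : nat).
Local Notation RR := (coordRing R n).
Variable D : RR -> RR.
Hypothesis hD : is_der D.

Lemma derD f h : D (f + h) = D f + D h.
Proof. have [L _] := hD. have := L 1 f h. by rewrite !scale1r. Qed.
Lemma der0 : D 0 = 0.
Proof. by apply/eqP; rewrite -[X in X == _](addrK (D 0)) -derD addr0 subrr. Qed.
Lemma derZ c f : D (c *: f) = c *: D f.
Proof. by have [L _] := hD; rewrite -[c *: f]addr0 L der0 addr0. Qed.
Lemma derN f : D (- f) = - D f.
Proof. by rewrite -scaleN1r derZ scaleN1r. Qed.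
Lemma derB f h : D (f - h) = D f - D h.
Proof. by rewrite derD derN. Qed.
Lemma derM f h : D (f * h) = f * D h + D f * h.
Proof. by have [_ M] := hD. Qed.
Lemma der_sum (I : Type) (r : seq I) (P : pred I) (F : I -> RR) :
  D (\sum_(i <- r | P i) F i) = \sum_(i <- r | P i) D (F i).
Proof. by apply: (big_rec2 (fun x y => D x = y)) => [|i x y _ <-]; [exact: der0|exact: derD]. Qed.
Lemma der1 : D 1 = 0.
Proof.
have := derM 1 1; rewrite !mul1r mulr1 => h.
by apply: (addrI (D 1)); rewrite addr0 -h.
Qed.
Lemma derC c : D c%:MP = 0.
Proof. by rewrite -[c%:MP]mulr1 mul_mpolyC derZ der1 scaler0. Qed.
End Der.

Section DerExt.
Variables (R : realType) (n : nat).
Local Notation RR := (coordRing R n).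

Lemma der_vanish (D : RR -> RR) : is_der D -> (forall i, D 'X_i = 0) -> forall f, D f = 0.
Proof.
move=> hD hX; elim/mpolyind => [|c m p _ _ IH]; first exact: der0.
rewrite derD // derZ // IH addr0 mpolyXE_id.
rewrite (big_ind (fun x => D x = 0)) ?scaler0 //; first exact: der1.
  by move=> x y hx hy; rewrite derM // hx hy mulr0 mul0r addr0.
move=> i _; elim: (m i) => [|k IHk]; first by rewrite expr0 der1.
by rewrite exprS derM // IHk hX mulr0 mul0r addr0.
Qed.

Lemma is_der_sub (D1 D2 : RR -> RR) : is_der D1 -> is_der D2 -> is_der (fun f => D1 f - D2 f).
Proof.
move=> h1 h2; split=> [c f h|f h].
  by rewrite (derD h1) (derD h2) (derZ h1) (derZ h2) scalerBr opprD addrACA.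
by rewrite (derM h1) (derM h2) mulrBr mulrBl opprD addrACA.
Qed.

Lemma der_ext (D1 D2 : RR -> RR) : is_der D1 -> is_der D2 ->
  (forall i, D1 'X_i = D2 'X_i) -> forall f, D1 f = D2 f.
Proof.
move=> h1 h2 hX f; apply/eqP; rewrite -subr_eq0; apply/eqP.
by apply: (der_vanish (is_der_sub h1 h2)) => i; rewrite hX subrr.
Qed.
End DerExt.

Lemma comp_comp (R : comRingType) (k : nat) (p : {mpoly R[k]}) (t s : k.-tuple {mpoly R[k]}) :
  (p \mPo t) \mPo s = p \mPo [tuple (tnth t i) \mPo s | i < k].
Proof.
rewrite [p \mPo t]comp_mpolyEX [RHS]comp_mpolyEX raddf_sum /=; apply: eq_bigr => m _.
rewrite comp_mpolyZ !comp_mpolyX rmorph_prod /=; congr (_ *: _).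
by apply: eq_bigr => i _; rewrite rmorphXn /= tnth_mktuple.
Qed.

Section Act.
Variables (R : realType) (n : nat) (gT : finGroupType) (G : {group gT})
          (rho : mx_representation R[i] G n).
Local Notation RR := (coordRing R n).
Local Notation Tg g := [tuple act_image rho g k | k < n + n].
Local Notation act := (Defs.act rho).
Local Notation qv := (qv R).
Local Notation pv := (pv R).

Lemma actX g k : act g 'X_k = act_image rho g k.
Proof. by rewrite /Defs.act comp_mpolyXU -tnth_nth tnth_mktuple. Qed.

Lemma actq g i : act g (qv i) = \sum_(j < n) rho g i j *: qv j.
Proof. by rewrite /qv actX /act_image (unsplitK (inl i)). Qed.
Lemma actp g i : act g (pv i) = \sum_(j < n) invmx (rho g) j i *: pv j.
Proof. by rewrite /pv actX /act_image (unsplitK (inr i)). Qed.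

Lemma actD g : {morph act g : x y / x + y}.
Proof. exact: (rmorphD (comp_mpoly (Tg g))). Qed.
Lemma actB g : {morph act g : x y / x - y}.
Proof. exact: (rmorphB (comp_mpoly (Tg g))). Qed.
Lemma actM g : {morph act g : x y / x * y}.
Proof. exact: (rmorphM (comp_mpoly (Tg g))). Qed.
Lemma act0 g : act g 0 = 0.
Proof. exact: (rmorph0 (comp_mpoly (Tg g))). Qed.
Lemma act1 g : act g 1 = 1.
Proof. exact: (rmorph1 (comp_mpoly (Tg g))). Qed.
Lemma actZ g c f : act g (c *: f) = c *: act g f.
Proof. exact: comp_mpolyZ. Qed.
Lemma actN g f : act g (- f) = - act g f.
Proof. exact: (rmorphN (comp_mpoly (Tg g))). Qed.
Lemma act_sum g (I : Type) (r : seq I) (P : pred I) (F : I -> RR) :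
  act g (\sum_(i <- r | P i) F i) = \sum_(i <- r | P i) act g (F i).
Proof. exact: (raddf_sum (comp_mpoly (Tg g))). Qed.
Lemma actMn g f k : act g (f *+ k) = act g f *+ k.
Proof. exact: (rmorphMn (comp_mpoly (Tg g))). Qed.

Lemma act_comp g h f : g \in G -> h \in G -> act g (act h f) = act (h * g)%g f.
Proof.
move=> gG hG; rewrite {1}/Defs.act comp_comp /Defs.act; suff -> : [tuple tnth [tuple act_image rho h k | k < n + n] k \mPo [tuple act_image rho g k | k < n + n] | k < n + n] = [tuple act_image rho (h * g)%g k | k < n + n] by [].
apply: eq_from_tnth => k; rewrite !tnth_mktuple /act_image.
case: (split k) => i.
  rewrite raddf_sum /= repr_mxM //.
  under eq_bigr => j _ do rewrite comp_mpolyZ [_ \mPo _]actq scaler_sumr.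
  rewrite exchange_big /=; apply: eq_bigr => l _.
  by rewrite mxE scaler_suml; apply: eq_bigr => j _; rewrite scalerA.
rewrite raddf_sum /= -[invmx (rho (h * g)%g)]repr_mxV ?groupM // invMg.
rewrite repr_mxM ?groupV // !repr_mxV //.
under eq_bigr => j _ do rewrite comp_mpolyZ [_ \mPo _]actp scaler_sumr.
rewrite exchange_big /=; apply: eq_bigr => l _.
by rewrite mxE scaler_suml; apply: eq_bigr => j _; rewrite scalerA mulrC.
Qed.

Lemma act_one f : act 1%g f = f.
Proof.
rewrite /Defs.act.
suff -> : [tuple act_image rho 1%g k | k < n + n] = [tuple ('X_k : RR) | k < n + n] by rewrite comp_mpoly_id.
apply: eq_from_tnth => k; rewrite !tnth_mktuple /act_image.
rewrite -[in RHS](splitK k); case: (split k) => i /=.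
  rewrite repr_mx1 (bigD1 i) //= big1 => [|j /negbTE nij]; last by rewrite mxE eq_sym nij scale0r.
  by rewrite mxE eqxx scale1r addr0.
rewrite repr_mx1 invmx1 (bigD1 i) //= big1 => [|j /negbTE nij]; last by rewrite mxE nij scale0r.
by rewrite mxE eqxx scale1r addr0.
Qed.

Lemma actK g f : g \in G -> act g (act g^-1 f) = f.
Proof. by move=> gG; rewrite act_comp ?groupV // mulVg act_one. Qed.
Lemma actVK g f : g \in G -> act g^-1 (act g f) = f.
Proof. by move=> gG; rewrite act_comp ?groupV // mulgV act_one. Qed.

End Act.

Lemma chain_alg (T : comRingType) (a f h fp hp : T) : a*(fp*h + f*hp) = f*(a*hp) + a*fp*h.
Proof. ring. Qed.
Lemma ham_alg (T : comRingType) (P Q a b c d g h : T) :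
  P*(a*h + g*b) - Q*(c*h + g*d) = g*(P*b - Q*d) + (P*a - Q*c)*h.
Proof. ring. Qed.

Section Omega.
Variables (R : realType) (n : nat) (gT : finGroupType) (G : {group gT})
          (rho : mx_representation R[i] G n).
Local Notation RR := (coordRing R n).
Local Notation act := (Defs.act rho).
Local Notation qv := (qv R).
Local Notation pv := (pv R).

Lemma pair_sum (M N : 'M[R[i]]_n) (a b : 'I_n -> RR) : N *m M = 1%:M ->
  \sum_i (\sum_j M i j *: a j) * (\sum_l N l i *: b l) = \sum_j a j * b j.
Proof.
move=> NM.
under eq_bigr => i _ do rewrite mulr_suml.
under eq_bigr => i _ do under eq_bigr => j _ do rewrite mulr_sumr.
rewrite exchange_big /=; apply: eq_bigr => j _.
rewrite exchange_big /=.
have e : forall l, \sum_i (M i j *: a j) * (N l i *: b l) = (N *m M) l j *: (a j * b l).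
  move=> l; rewrite mxE scaler_suml; apply: eq_bigr => i _.
  by rewrite -scalerAl -scalerAr scalerA (mulrC (M i j)).
under eq_bigr => l _ do rewrite e NM.
rewrite (bigD1 j) //= big1 => [|l nlj]; last by rewrite mxE (negbTE nlj) scale0r.
by rewrite mxE eqxx scale1r addr0.
Qed.

Lemma omega0_conj g (A B A' B' : RR -> RR) : g \in G -> is_der A -> is_der B ->
  (forall x, A' x = act g^-1 (A (act g x))) ->
  (forall x, B' x = act g^-1 (B (act g x))) ->
  omega0 A' B' = act g^-1 (omega0 A B).
Proof.
move=> gG dA dB hA hB.
have eq_ : forall (D D' : RR -> RR), is_der D -> (forall x, D' x = act g^-1 (D (act g x))) ->
   (forall i, D' (qv i) = \sum_j rho g i j *: act g^-1 (D (qv j))) /\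
   (forall i, D' (pv i) = \sum_j invmx (rho g) j i *: act g^-1 (D (pv j))).
  move=> D D' dD hD; split=> i.
    by rewrite hD actq (der_sum dD) act_sum; apply: eq_bigr => j _; rewrite (derZ dD) actZ.
  by rewrite hD actp (der_sum dD) act_sum; apply: eq_bigr => j _; rewrite (derZ dD) actZ.
have [eAq eAp] := eq_ A A' dA hA; have [eBq eBp] := eq_ B B' dB hB.
have inv1 : invmx (rho g) *m rho g = 1%:M by rewrite mulVmx // repr_mx_unit.
rewrite /omega0 sumrB act_sum.
under [in RHS]eq_bigr => i _ do rewrite actB !actM.
rewrite sumrB.
under eq_bigr => i _ do rewrite eAq eBp.
rewrite pair_sum; last exact: inv1.
have e2 : forall i, A' (pv i) * B' (qv i) = (\sum_l rho g i l *: act g^-1 (B (qv l))) * (\sum_j invmx (rho g) j i *: act g^-1 (A (pv j))).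
  by move=> i; rewrite eAp eBq; apply: mulrC.
rewrite (eq_bigr _ (fun i _ => e2 i)) pair_sum; last exact: inv1.
apply: congr1; apply: congr1; apply: eq_bigr => j _; exact: mulrC.
Qed.

Lemma omega0_inv g (A B : RR -> RR) : g \in G -> is_der A -> is_der B ->
  der_invariant rho A -> der_invariant rho B -> act g (omega0 A B) = omega0 A B.
Proof.
move=> gG dA dB iA iB.
have gV : (g^-1)%g \in G by rewrite groupV.
have hA : forall x, A x = act ((g^-1)^-1)%g (A (act (g^-1)%g x)) by move=> x; rewrite (iA _ gV).
have hB : forall x, B x = act ((g^-1)^-1)%g (B (act (g^-1)%g x)) by move=> x; rewrite (iB _ gV).
have := omega0_conj gV dA dB hA hB; rewrite invgK => e.
by rewrite -e.
Qed.

Lemma mderivXU (k j : 'I_(n + n)) : mderiv k ('X_j : RR) = (j == k)%:R.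
Proof.
rewrite mderivX mnm1E; case: eqP => [->|_]; last by rewrite scale0r.
have -> : (U_(k) - U_(k) = 0)%MM by apply/mnmP => l; rewrite mnmBE mnm0E subnn.
by rewrite mpolyX0 scale1r.
Qed.

Definition chain (A : RR -> RR) (f : RR) := \sum_(k < n + n) A 'X_k * mderiv k f.

Lemma is_der_chain A : is_der (chain A).
Proof.
split=> [c f h|f h]; rewrite /chain.
  rewrite scaler_sumr -big_split; apply: eq_bigr => k _.
  by rewrite mderivD mderivZ mulrDr scalerAr.
rewrite mulr_sumr mulr_suml -big_split; apply: eq_bigr => k _.
rewrite mderivM; exact: chain_alg.
Qed.

Lemma chain_rule A : is_der A -> forall f, A f = chain A f.
Proof.
move=> dA; apply: der_ext => // [|j]; first exact: is_der_chain.
rewrite /chain (bigD1 j) //= big1 => [|k nkj]; first by rewrite mderivXU eqxx mulr1 addr0.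
by rewrite mderivXU eq_sym (negbTE nkj) mulr0.
Qed.

Definition ham (f : RR) (h : RR) : RR :=
  \sum_(j < n) (mderiv (rshift n j) f * mderiv (lshift n j) h
                - mderiv (lshift n j) f * mderiv (rshift n j) h).

Lemma is_der_ham f : is_der (ham f).
Proof.
split=> [c g h|g h]; rewrite /ham.
  rewrite scaler_sumr -big_split; apply: eq_bigr => k _.
  rewrite !mderivD !mderivZ !mulrDr -!scalerAr; rewrite scalerBr.
  by rewrite opprD addrACA.
rewrite mulr_sumr mulr_suml -big_split; apply: eq_bigr => k _.
rewrite !mderivM; exact: ham_alg.
Qed.

Lemma ham_q f j : ham f (qv j) = mderiv (rshift n j) f.
Proof.
rewrite /ham /qv (bigD1 j) //= big1 => [|l nlj].
  by rewrite !mderivXU eqxx eq_lrshift mulr0 mulr1 subr0 addr0.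
by rewrite !mderivXU eq_lshift eq_lrshift eq_sym (negbTE nlj) !mulr0 subr0.
Qed.

Lemma ham_p f j : ham f (pv j) = - mderiv (lshift n j) f.
Proof.
rewrite /ham /pv (bigD1 j) //= big1 => [|l nlj].
  by rewrite !mderivXU eqxx eq_rlshift mulr0 mulr1 sub0r addr0.
by rewrite !mderivXU eq_rshift eq_rlshift eq_sym (negbTE nlj) !mulr0 subr0.
Qed.

Lemma omega0_ham A f : is_der A -> omega0 A (ham f) = - A f.
Proof.
move=> dA; rewrite (chain_rule dA) /chain big_split_ord /= /omega0.
rewrite opprD -!sumrN -big_split /=; apply: eq_bigr => j _.
by rewrite ham_q ham_p mulrN.
Qed.

End Omega.

Lemma pder_alg (T : comRingType) (q y Ey c q' : T) :
  q * Ey + q' * Ey * y + 0 = (q + q' * y) * Ey.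
Proof. ring. Qed.

Section PolyDer.
Variables (R : realType) (n : nat).
Local Notation RR := (coordRing R n).

Lemma poly_der (E : RR -> RR) : is_der E -> forall (p : {poly RR}) y,
  (forall i, E p`_i = 0) -> E p.[y] = p^`().[y] * E y.
Proof.
move=> hE; elim/poly_ind => [|q c IH] y hc.
  by rewrite horner0 deriv0 horner0 mul0r (der0 hE).
have hq : forall i, E q`_i = 0.
  by move=> i; have := hc i.+1; rewrite coefD coefMX coefC /= addr0.
have h0 : E c = 0 by have := hc 0%N; rewrite coefD coefMX coefC /= add0r.
rewrite hornerMXaddC derivMXaddC (derD hE) (derM hE) (IH _ hq) h0 hornerD hornerM hornerX.
exact: pder_alg.
Qed.
End PolyDer.

Section Inj.
Variables (R : realType) (n : nat) (gT : finGroupType) (G : {group gT})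
          (rho : mx_representation R[i] G n).
Local Notation RR := (coordRing R n).
Local Notation act := (Defs.act rho).
Local Notation Tg g := [tuple act_image rho g k | k < n + n].

Lemma der_inv_zero (E : RR -> RR) : is_der E ->
  (forall f, Ginvariant rho f -> E f = 0) -> forall f, E f = 0.
Proof.
move=> hE hinv; apply: der_vanish => // k.
set x : RR := 'X_k.
pose O := undup [seq act g x | g <- enum G].
have uO : uniq O by exact: undup_uniq.
have memO : forall y, y \in O -> exists2 h, h \in G & y = act h x.
  move=> y; rewrite mem_undup => /mapP [h]; rewrite mem_enum => hG ->.
  by exists h.
have inO : forall h, h \in G -> act h x \in O.
  by move=> h hG; rewrite mem_undup; apply/mapP; exists h; rewrite ?mem_enum.
have xO : x \in O by rewrite -{1}(act_one rho x) inO ?group1.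
have permO : forall g, g \in G -> perm_eq (map (act g) O) O.
  move=> g gG; apply: uniq_perm => //.
    rewrite map_inj_uniq //; apply: (@can_inj _ _ _ (act g^-1)) => f; exact: actVK.
  move=> y; apply/idP/idP.
    move=> /mapP [z /memO [h hG ->] ->].
    by rewrite act_comp // inO // groupM.
  move=> /memO [h hG ->]; apply/mapP; exists (act (h * g^-1)%g x).
    by rewrite inO // groupM ?groupV.
  rewrite act_comp; first by rewrite -mulgA mulVg mulg1.
    by [].
  by rewrite groupM ?groupV.
pose Q : {poly RR} := \prod_(h <- O) ('X - h%:P).
have coefQ : forall i, Ginvariant rho Q`_i.
  move=> i; apply/forall_inP => g gG; apply/eqP.
  have mapQ : map_poly (comp_mpoly (Tg g)) Q = Q.
    rewrite rmorph_prod /=.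
    under eq_bigr => h _ do rewrite map_polyXsubC.
    rewrite -(big_map (comp_mpoly (Tg g)) xpredT (fun h => 'X - h%:P)).
    exact: (perm_big _ (permO g gG)).
  have := congr1 (fun p : {poly RR} => p`_i) mapQ; rewrite coef_map /= => e.
  exact: e.
have Qx : Q.[x] = 0 by apply/rootP; rewrite root_prod_XsubC.
have Q'x : Q^`().[x] != 0.
  rewrite /Q (perm_big _ (perm_to_rem xO)) big_cons derivM derivXsubC mul1r.
  rewrite hornerD hornerM hornerXsubC subrr mul0r addr0 horner_prod.
  rewrite prodf_seq_neq0; apply/allP => h hin; rewrite hornerXsubC subr_eq0.
  apply/implyP => _; apply/eqP => exh; move: hin; rewrite -exh.
  by rewrite mem_rem_uniqF.
have := poly_der hE x (fun i => hinv _ (coefQ i)).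
rewrite Qx (der0 hE) => /esym /eqP; rewrite mulf_eq0 (negbTE Q'x) /=.
by move/eqP.
Qed.

End Inj.



Lemma br_alg (T : comRingType) (f h X0h X1h X0f X1f X01h X10h X01f X10f : T) :
  (f * X01h + X0f * X1h + (X1f * X0h + X01f * h))
  - (f * X10h + X1f * X0h + (X0f * X1h + X10f * h))
  = f * (X01h - X10h) + (X01f - X10f) * h.
Proof. ring. Qed.

Lemma lin1_alg (T : comRingType) (a Aq Ap Bq Bp Cq Cp : T) :
  (a * Aq + Bq) * Cp - (a * Ap + Bp) * Cq = a * (Aq * Cp - Ap * Cq) + (Bq * Cp - Bp * Cq).
Proof. ring. Qed.
Lemma lin2_alg (T : comRingType) (a Aq Ap Bq Bp Cq Cp : T) :
  Cq * (a * Ap + Bp) - Cp * (a * Aq + Bq) = a * (Cq * Ap - Cp * Aq) + (Cq * Bp - Cp * Bq).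
Proof. ring. Qed.

Lemma closed_alg (T : comRingType) (a0 a1 a2 b0 b1 b2 a01 a02 a10 a12 a20 a21
   b01 b02 b10 b12 b20 b21 : T) :
  a1 * b02 + a01 * b2 - (b1 * a02 + b01 * a2)
  - (a0 * b12 + a10 * b2 - (b0 * a12 + b10 * a2))
  + (a0 * b21 + a20 * b1 - (b0 * a21 + b20 * a1))
  - ((a01 - a10) * b2 - (b01 - b10) * a2)
  + ((a02 - a20) * b1 - (b02 - b20) * a1)
  - ((a12 - a21) * b0 - (b12 - b21) * a0) = 0.
Proof. ring. Qed.

Section Main.
Variables (R : realType) (n : nat) (gT : finGroupType) (G : {group gT})
          (rho : mx_representation R[i] G n).
Local Notation RR := (coordRing R n).
Local Notation act := (Defs.act rho).
Local Notation qv := (qv R).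
Local Notation pv := (pv R).
Local Notation Ginv := (Ginvariant rho).
Local Notation dinv := (is_der_inv rho).

Lemma invP f g : Ginv f -> g \in G -> act g f = f.
Proof. by move=> /forall_inP hf gG; apply/eqP; apply: hf. Qed.
Lemma invI f : (forall g, g \in G -> act g f = f) -> Ginv f.
Proof. by move=> h; apply/forall_inP => g gG; apply/eqP; apply: h. Qed.
Lemma inv0 : Ginv 0.
Proof. by apply: invI => g _; rewrite act0. Qed.
Lemma invD f h : Ginv f -> Ginv h -> Ginv (f + h).
Proof. by move=> hf hh; apply: invI => g gG; rewrite actD (invP hf gG) (invP hh gG). Qed.
Lemma invB f h : Ginv f -> Ginv h -> Ginv (f - h).
Proof. by move=> hf hh; apply: invI => g gG; rewrite actB (invP hf gG) (invP hh gG). Qed.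
Lemma invM f h : Ginv f -> Ginv h -> Ginv (f * h).
Proof. by move=> hf hh; apply: invI => g gG; rewrite actM (invP hf gG) (invP hh gG). Qed.
Lemma invZ c f : Ginv f -> Ginv (c *: f).
Proof. by move=> hf; apply: invI => g gG; rewrite actZ (invP hf gG). Qed.

Section DI.
Variable X : RR -> RR.
Hypothesis hX : dinv X.
Lemma dinv_out f : ~~ Ginv f -> X f = 0.
Proof. by case: hX => H _ _ _; apply: H. Qed.
Lemma dinv_inv f : Ginv f -> Ginv (X f).
Proof. by case: hX => _ H _ _; apply: H. Qed.
Lemma dinvL c f h : Ginv f -> Ginv h -> X (c *: f + h) = c *: X f + X h.
Proof. by case: hX => _ _ H _; apply: H. Qed.
Lemma dinvM f h : Ginv f -> Ginv h -> X (f * h) = f * X h + X f * h.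
Proof. by case: hX => _ _ _ H; apply: H. Qed.
Lemma dinvD f h : Ginv f -> Ginv h -> X (f + h) = X f + X h.
Proof. by move=> hf hh; have := dinvL 1 hf hh; rewrite !scale1r. Qed.
Lemma dinv0 : X 0 = 0.
Proof. by have := dinvD inv0 inv0; rewrite addr0 => e; apply: (addrI (X 0)); rewrite addr0 -e. Qed.
Lemma dinvZ c f : Ginv f -> X (c *: f) = c *: X f.
Proof. by move=> hf; have := dinvL c hf inv0; rewrite !addr0 dinv0 addr0. Qed.
Lemma dinvN f : Ginv f -> X (- f) = - X f.
Proof. by move=> hf; rewrite -scaleN1r dinvZ // scaleN1r. Qed.
Lemma dinvB f h : Ginv f -> Ginv h -> X (f - h) = X f - X h.
Proof.
move=> hf hh; rewrite dinvD ?dinvN //.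
by rewrite -scaleN1r; apply: invZ.
Qed.
End DI.

Lemma dinv_bracket (X0 X1 : RR -> RR) : dinv X0 -> dinv X1 -> dinv (der_bracket X0 X1).
Proof.
move=> h0 h1; rewrite /der_bracket; split.
- move=> f hf; rewrite (dinv_out h1 hf) (dinv_out h0 hf).
  by rewrite (dinv0 h0) (dinv0 h1) subrr.
- move=> f hf; apply: invB; apply: dinv_inv => //; exact: dinv_inv.
- move=> c f h hf hh.
  rewrite (dinvL h1 c hf hh) (dinvL h0 c hf hh).
  rewrite (dinvL h0 c (dinv_inv h1 hf) (dinv_inv h1 hh)).
  rewrite (dinvL h1 c (dinv_inv h0 hf) (dinv_inv h0 hh)).
  by rewrite scalerBr opprD addrACA.
- move=> f h hf hh.
  rewrite (dinvM h1 hf hh) (dinvM h0 hf hh).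
  have i1h := dinv_inv h1 hh; have i1f := dinv_inv h1 hf.
  have i0h := dinv_inv h0 hh; have i0f := dinv_inv h0 hf.
  rewrite (dinvD h0 (invM hf i1h) (invM i1f hh)) (dinvD h1 (invM hf i0h) (invM i0f hh)).
  rewrite (dinvM h0 hf i1h) (dinvM h0 i1f hh) (dinvM h1 hf i0h) (dinvM h1 i0f hh).
  exact: br_alg.
Qed.

Lemma der_bracket_der (D0 D1 : RR -> RR) : is_der D0 -> is_der D1 -> is_der (der_bracket D0 D1).
Proof.
move=> h0 h1; rewrite /der_bracket; split.
- move=> c f h.
  rewrite (derD h1) (derZ h1) (derD h0) (derZ h0) (derD h0) (derZ h0) (derD h1) (derZ h1).
  by rewrite scalerBr opprD addrACA.
- move=> f h.
  rewrite (derM h1) (derM h0) (derD h0) (derD h1) !(derM h0) !(derM h1).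
  exact: br_alg.
Qed.

Lemma omega0_ext (A A' B B' : RR -> RR) : (forall f, A f = A' f) -> (forall f, B f = B' f) ->
  omega0 A B = omega0 A' B'.
Proof. by move=> hA hB; rewrite /omega0; apply: eq_bigr => i _; rewrite !hA !hB. Qed.

Lemma omega0_lin1 (a : RR) (A B C : RR -> RR) :
  omega0 (der_scale_add a A B) C = a * omega0 A C + omega0 B C.
Proof.
rewrite /omega0 /der_scale_add mulr_sumr -big_split; apply: eq_bigr => i _.
exact: lin1_alg.
Qed.
Lemma omega0_lin2 (a : RR) (A B C : RR -> RR) :
  omega0 C (der_scale_add a A B) = a * omega0 C A + omega0 C B.
Proof.
rewrite /omega0 /der_scale_add mulr_sumr -big_split; apply: eq_bigr => i _.
exact: lin2_alg.
Qed.

Lemma omega0_alt (A : RR -> RR) : omega0 A A = 0.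
Proof. by rewrite /omega0 big1 // => i _; rewrite [X in _ - X]mulrC subrr. Qed.

Lemma omega0_closed (D0 D1 D2 : RR -> RR) : is_der D0 -> is_der D1 -> is_der D2 ->
  D0 (omega0 D1 D2) - D1 (omega0 D0 D2) + D2 (omega0 D0 D1)
  - omega0 (der_bracket D0 D1) D2 + omega0 (der_bracket D0 D2) D1
  - omega0 (der_bracket D1 D2) D0 = 0.
Proof.
move=> h0 h1 h2; rewrite /omega0 (der_sum h0) (der_sum h1) (der_sum h2).
rewrite -sumrB -big_split /= -sumrB -big_split /= -sumrB.
apply: big1 => i _; rewrite /der_bracket.
rewrite (derB h0) (derB h1) (derB h2) !(derM h0) !(derM h1) !(derM h2).
exact: closed_alg.
Qed.

Lemma is_der_conj g (D : RR -> RR) : g \in G -> is_der D -> is_der (fun h => act g^-1 (D (act g h))).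
Proof.
move=> gG hD; have K : forall f, act g^-1 (act g f) = f by move=> f; exact: actVK.
split.
- by move=> c f h; rewrite actD actZ (derD hD) (derZ hD) actD actZ.
- by move=> f h; rewrite actM (derM hD) actD !actM !K.
Qed.

End Main.

Section Extra.
Variables (R : realType) (n : nat) (gT : finGroupType) (G : {group gT})
          (rho : mx_representation R[i] G n).
Local Notation RR := (coordRing R n).

Lemma is_der_sumG (F : gT -> RR -> RR) : (forall g, g \in G -> is_der (F g)) ->
  is_der (fun h => \sum_(g in G) F g h).
Proof.
move=> dF; split.
  move=> c f h; rewrite scaler_sumr -big_split; apply: eq_bigr => g gG.
  by have [L _] := dF g gG; exact: L.
move=> f h; rewrite mulr_sumr mulr_suml -big_split; apply: eq_bigr => g gG.
by have [_ M] := dF g gG; exact: M.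
Qed.

Lemma reindexG x (F : gT -> RR) : x \in G -> \sum_(g in G) F (x * g)%g = \sum_(g in G) F g.
Proof.
move=> xG; rewrite [RHS](reindex_inj (mulgI x)) /=.
by apply: eq_bigl => g; rewrite groupMl.
Qed.

Lemma omega0_sum2 (A : RR -> RR) (F : gT -> RR -> RR) :
  omega0 A (fun h => \sum_(g in G) F g h) = \sum_(g in G) omega0 A (F g).
Proof.
rewrite /omega0 exchange_big /=; apply: eq_bigr => i _.
by rewrite !mulr_sumr sumrB.
Qed.
End Extra.

Unset Implicit Arguments.
Set Strict Implicit.

Theorem mainTheorem7 (R : realType) (n : nat) (gT : finGroupType)
  (G : {group gT}) (rho : mx_representation R[i] G n)
  (lam : (coordRing R n -> coordRing R n) -> (coordRing R n -> coordRing R n)) :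
  (* lambda maps Der(R^Gamma) into Der(R)^Gamma *)
  (forall X, is_der_inv rho X -> is_der (lam X) /\ der_invariant rho (lam X)) ->
  (* lambda is R^Gamma-linear *)
  (forall a X Y, Ginvariant rho a -> is_der_inv rho X -> is_der_inv rho Y ->
     lam (der_scale_add a X Y) = der_scale_add a (lam X) (lam Y)) ->
  (* pi o lambda = id : (lambda X) restricted to R^Gamma is X *)
  (forall X, is_der_inv rho X -> forall f, Ginvariant rho f -> lam X f = X f) ->
  is_alt2 rho (omega lam) /\ is_closed2 rho (omega lam) /\
  is_nondegenerate2 rho (omega lam).
Proof.
move=> h1 h2 h3.
have dl : forall X, is_der_inv rho X -> is_der (lam X) := fun X hX => (h1 X hX).1.
have il : forall X, is_der_inv rho X -> der_invariant rho (lam X) := fun X hX => (h1 X hX).2.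
have oinv : forall X Y, is_der_inv rho X -> is_der_inv rho Y -> Ginvariant rho (omega lam X Y).
  move=> X Y hX hY; apply: invI => g gG.
  exact: (omega0_inv gG (dl _ hX) (dl _ hY) (il _ hX) (il _ hY)).
split; [|split].
- split.
  + exact: oinv.
  + move=> a X Y Z ha hX hY hZ; rewrite /omega (h2 a X Y ha hX hY); exact: omega0_lin1.
  + move=> a X Y Z ha hX hY hZ; rewrite /omega (h2 a X Y ha hX hY); exact: omega0_lin2.
  + move=> X hX; exact: omega0_alt.
- move=> X0 X1 X2 h0 h1' h2'; rewrite /dR2.
  have brk : forall Xa Xb, is_der_inv rho Xa -> is_der_inv rho Xb ->
      forall f, lam (der_bracket Xa Xb) f = der_bracket (lam Xa) (lam Xb) f.
    move=> Xa Xb ha hb f; apply/eqP; rewrite -subr_eq0; apply/eqP; move: f.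
    apply: (@der_inv_zero R n gT G rho
              (fun f => lam (der_bracket Xa Xb) f - der_bracket (lam Xa) (lam Xb) f)).
      exact: (is_der_sub (dl _ (dinv_bracket ha hb)) (der_bracket_der (dl _ ha) (dl _ hb))).
    move=> f hf; rewrite (h3 _ (dinv_bracket ha hb) f hf) /der_bracket.
    rewrite (h3 _ hb f hf) (h3 _ ha f hf) (h3 _ ha _ (dinv_inv hb hf)).
    by rewrite (h3 _ hb _ (dinv_inv ha hf)) subrr.
  rewrite -(h3 _ h0 _ (oinv _ _ h1' h2')) -(h3 _ h1' _ (oinv _ _ h0 h2')).
  rewrite -(h3 _ h2' _ (oinv _ _ h0 h1')) /omega.
  rewrite (omega0_ext (brk _ _ h0 h1') (fun f => erefl)).
  rewrite (omega0_ext (brk _ _ h0 h2') (fun f => erefl)).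
  rewrite (omega0_ext (brk _ _ h1' h2') (fun f => erefl)).
  exact: (omega0_closed (dl _ h0) (dl _ h1') (dl _ h2')).
- move=> X hX hw f.
  case: (boolP (Ginvariant rho f)) => hf; last exact: (dinv_out hX hf).
  have dA := dl _ hX; have iA := il _ hX.
  pose B := fun h => \sum_(g in G) Defs.act rho g^-1 (ham f (Defs.act rho g h)).
  have dB : is_der B.
    by apply: is_der_sumG => g gG; apply: is_der_conj => //; exact: is_der_ham.
  have iB : forall x, x \in G -> forall h, Defs.act rho x^-1 (B (Defs.act rho x h)) = B h.
    move=> x xG h; rewrite /B act_sum.
    have e : forall g, g \in G -> Defs.act rho x^-1 (Defs.act rho g^-1 (ham f (Defs.act rho g (Defs.act rho x h))))
        = Defs.act rho (x * g)^-1 (ham f (Defs.act rho (x * g)%g h)).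
      move=> g gG; rewrite (act_comp _ _ gG xG) act_comp; last by rewrite groupV.
        by rewrite invMg.
      by rewrite groupV.
    pose Fx := fun g => Defs.act rho g^-1 (ham f (Defs.act rho g h)).
    transitivity (\sum_(g in G) Fx (x * g)%g); last exact: (reindexG Fx xG).
    apply: eq_bigr => g gG; exact: (e g gG).
  pose Y := fun h => if Ginvariant rho h then B h else 0.
  have Binv : forall h, Ginvariant rho h -> Ginvariant rho (B h).
    move=> h hh; apply: invI => x xG.
    rewrite -{1}(iB x xG h) actK; last exact: xG.
    by rewrite (invP hh xG).
  have hY : is_der_inv rho Y.
    split.
    - by move=> h /negbTE hh; rewrite /Y hh.
    - by move=> h hh; rewrite /Y hh; apply: Binv.
    - move=> c g h hg hh; rewrite /Y hg hh (invD (invZ c hg) hh) /=.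
      by have [L _] := dB; exact: L.
    - move=> g h hg hh; rewrite /Y hg hh (invM hg hh) /=.
      by have [_ M] := dB; exact: M.
  have lamY : forall h, lam Y h = B h.
    move=> h; apply/eqP; rewrite -subr_eq0; apply/eqP; move: h.
    apply: (@der_inv_zero R n gT G rho (fun h => lam Y h - B h)).
      exact: (is_der_sub (dl _ hY) dB).
    by move=> h hh; rewrite (h3 _ hY h hh) /Y hh subrr.
  have := hw Y hY; rewrite /omega (omega0_ext (fun f => erefl) lamY).
  rewrite /B omega0_sum2.
  have e : forall g, g \in G ->
      omega0 (lam X) (fun h => Defs.act rho g^-1 (ham f (Defs.act rho g h))) = - X f.
    move=> g gG.
    rewrite (@omega0_conj R n gT G rho g (lam X) (ham f) (lam X) _ gG dA (is_der_ham f)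
               (fun x => esym (iA g gG x)) (fun x => erefl)).
    rewrite (omega0_ham f dA) (h3 _ hX f hf) actN.
    by rewrite (invP (dinv_inv hX hf) (groupVr gG)).
  rewrite (eq_bigr _ e) sumr_const => /eqP.
  rewrite -scaler_nat scaler_eq0 Num.Theory.pnatr_eq0.
  case/orP => [/eqP hc|]; last by rewrite oppr_eq0 => /eqP.
  exfalso; have := cardG_gt0 G; rewrite lt0n => /eqP; apply; exact: hc.
Qed.
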